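(* Let $F$ be an algebraically closed field and $A$ a symmetric $F$-algebra with symmetrizing linear form $\lambda:A\to F$. Let $I$ be a two-sided ideal of $A$ such that $A/I$ is also a symmetric $F$-algebra, with symmetrizing linear form $\mu:A/I\to F$. Let $\nu:A\to A/I$, $a\mapsto a+I$, be the canonical epimorphism and let $\nu^\ast:A/I\to A$ be its adjoint with respect to $\lambda$ and $\mu$, i.e. the $F$-linear map satisfying $\lambda(\nu^\ast(x)a)=\mu(x\nu(a))$ for all $x\in A/I$, $a\in A$. If $L$ is an ideal of the center $\mathrm{Z}(A/I)$, then $\nu^\ast(L)$ is an ideal of the center $\mathrm{Z}(A)$.
   Context: A symmetrizing linear form on a finite-dimensional algebra $A$ is a linear form $\lambda$ such that $\lambda(ab)=\lambda(ba)$ for all $a,b$ and whose kernel contains no nonzero left (or right) ideal; equivalently $(a,b)\mapsto\lambda(ab)$ is a nondegenerate symmetric associative bilinear form. *)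

(* Defs.v *)
From HB Require Import structures.
From mathcomp Require Import all_boot all_order all_algebra all_field.
Set Implicit Arguments. Unset Strict Implicit. Unset Printing Implicit Defensive.
Import GRing.Theory.
Local Open Scope ring_scope.

Definition in_center (R : nzRingType) (z : R) : Prop := forall b : R, z * b = b * z.

Definition is_left_ideal (R : nzRingType) (J : R -> Prop) : Prop :=
  [/\ J 0, (forall x y, J x -> J y -> J (x - y)) & (forall r x, J x -> J (r * x))].

Definition is_linear_form (F : fieldType) (A : falgType F) (lam : A -> F) : Prop :=
  forall (k : F) (a b : A), lam (k *: a + b) = k * lam a + lam b.

Definition symmetrizing (F : fieldType) (A : falgType F) (lam : A -> F) : Prop :=
  [/\ is_linear_form lam,
      (forall a b : A, lam (a * b) = lam (b * a)) &
      (forall J : A -> Prop, is_left_ideal J -> (forall x, J x -> lam x = 0) ->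
         forall x, J x -> x = 0)].

(* An ideal of the center Z(R) of R (Z(R) is commutative, so ideal = two-sided). *)
Definition is_center_ideal (R : nzRingType) (L : R -> Prop) : Prop :=
  [/\ (forall x, L x -> in_center x),
      L 0,
      (forall x y, L x -> L y -> L (x - y)) &
      (forall z x, in_center z -> L x -> L (z * x))].

Definition is_alg_epi (F : fieldType) (A B : falgType F) (nu : A -> B) : Prop :=
  [/\ (forall (k : F) (a b : A), nu (k *: a + b) = k *: nu a + nu b),
      (forall a b : A, nu (a * b) = nu a * nu b),
      nu 1 = 1 &
      (forall y : B, exists a : A, nu a = y)].

(* Main.v *)
Require Import Defs.
From HB Require Import structures.
From mathcomp Require Import all_boot all_order all_algebra all_field.
Local Open Scope ring_scope.
Import GRing.Theory.

Lemma lin0 {F : fieldType} {V : lmodType F} {W : lmodType F} {f : V -> W} :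
  (forall (k : F) a b, f (k *: a + b) = k *: f a + f b) -> f 0 = 0.
Proof.
move=> H; have := H 1 0 0; rewrite !scale1r addr0 => E.
by apply: (addrI (f 0)); rewrite addr0 -E.
Qed.

Lemma linB {F : fieldType} {V : lmodType F} {W : lmodType F} {f : V -> W} :
  (forall (k : F) a b, f (k *: a + b) = k *: f a + f b) -> forall a b, f (a - b) = f a - f b.
Proof.
move=> H a b; have := H (-1) b a; rewrite !scaleN1r => E.
by rewrite addrC E addrC.
Qed.

Lemma flin0 {F : fieldType} {A : falgType F} {lam : A -> F} :
  is_linear_form lam -> lam 0 = 0.
Proof.
move=> H; have := H 1 0 0; rewrite !scale1r mul1r addr0 => E.
by apply: (addrI (lam 0)); rewrite addr0 -E.
Qed.

Lemma flinB {F : fieldType} {A : falgType F} {lam : A -> F} :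
  is_linear_form lam -> forall a b, lam (a - b) = lam a - lam b.
Proof.
move=> H a b; have := H (-1) b a; rewrite scaleN1r mulN1r => E.
by rewrite addrC E addrC.
Qed.

Lemma nondeg {F : fieldType} {A : falgType F} {lam : A -> F} :
  symmetrizing lam -> forall y, (forall c, lam (y * c) = 0) -> y = 0.
Proof.
case=> Hl Hs Hn y Hy.
apply: (Hn (fun y => forall c, lam (y * c) = 0)) => //.
- split.
  + by move=> c; rewrite mul0r (flin0 Hl).
  + by move=> a b Ha Hb c; rewrite mulrBl (flinB Hl) Ha Hb subr0.
  + by move=> r x Hx c; rewrite -mulrA Hs -mulrA Hx.
- by move=> x Hx; rewrite -(mulr1 x) Hx.
Qed.

Theorem proposition2 (F : closedFieldType) (A B : falgType F)
    (lam : A -> F) (mu : B -> F) (nu : A -> B) (nu_star : B -> A)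
    (L : B -> Prop) :
  symmetrizing lam ->
  symmetrizing mu ->
  is_alg_epi nu ->
  (forall (k : F) (x y : B), nu_star (k *: x + y) = k *: nu_star x + nu_star y) ->
  (forall (x : B) (a : A), lam (nu_star x * a) = mu (x * nu a)) ->
  is_center_ideal L ->
  is_center_ideal (fun a : A => exists2 x : B, L x & a = nu_star x).
Proof.
move=> Slam Smu [nuL nuM nu1 nuS] nsL adj [LC L0 LB LM].
have Slam' := Slam; case: Slam' => Hl Hs _.
case: Smu => _ Ms _.
split.
- move=> a [x Lx ->] b; apply/eqP; rewrite -subr_eq0; apply/eqP.
  apply: (nondeg Slam) => c.
  rewrite mulrBl (flinB Hl) -mulrA adj -mulrA Hs -mulrA adj !nuM.
  rewrite mulrA (LC x Lx) -mulrA Ms -mulrA.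
  by rewrite mulrA (LC x Lx) -mulrA Ms -!mulrA subrr.
- by exists 0 => //; rewrite (lin0 nsL).
- move=> a b [x Lx ->] [y Ly ->]; exists (x - y); first exact: LB.
  by rewrite (linB nsL).
- move=> z a Cz [x Lx ->].
  have Cnz : in_center (nu z).
    by move=> b; have [c <-] := nuS b; rewrite -!nuM Cz.
  exists (nu z * x); first exact: LM.
  apply/eqP; rewrite -subr_eq0; apply/eqP.
  apply: (nondeg Slam) => c.
  rewrite mulrBl (flinB Hl) -mulrA Hs -mulrA !adj !nuM.
  rewrite (Cnz x) -mulrA Ms -!mulrA.
  have E : nu z * x = x * nu z := Cnz x.
  by rewrite (Ms (nu c)) E -(mulrA x) subrr.
Qed.
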